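(* Let $n\ge 2$, $c\in\mathbb R$, $d>0$, $\overline K>K>0$, $\eta:=(\overline K-K)/4$, $v\in C^1(\mathbb R^n)$, and $\Gamma\subseteq{\rm C}(d,K)$. Let $Z_\star:=\{x'\in\overline{B^{n-1}_d}: {\rm r}(x')\cap\{v=c\}\ne\varnothing\}$. Suppose that $\{v=c\}\cap{\rm C}(d,\overline K)\ne\varnothing$, that $\{v=c\}\cap{\rm C}(d,\overline K)\subseteq\Gamma_\eta:=\bigcup_{p\in\Gamma}B_\eta(p)$, and that $\partial_n v(x)>0$ for all $x\in\mathbb R^n$. Then $Z_\star=\overline{B^{n-1}_d}$.
   Context: Points of $\mathbb R^n$ are written $x=(x',x_n)\in\mathbb R^{n-1}\times\mathbb R$, and $\partial_n=\partial/\partial x_n$. For $d,h>0$, ${\rm C}(d,h):=\{x\in\mathbb R^n: |x'|<d,\ |x_n|<h\}$. $B^{n-1}_d$ is the open ball of radius $d$ centered at $0$ in $\mathbb R^{n-1}$; $B_\eta(p)$ is the open ball in $\mathbb R^n$. For $x'\in\mathbb R^{n-1}$, ${\rm r}(x'):=\{(x',t): t\in\mathbb R\}$. *)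

(* Defs.v *)
(* Points of R^n, n = m.+1 (m >= 1), are row vectors 'rV[R]_(m.+1). *)
From HB Require Import structures.
From mathcomp Require Import all_boot all_order all_algebra.
From mathcomp Require Import all_classical all_reals all_analysis.
Set Implicit Arguments. Unset Strict Implicit. Unset Printing Implicit Defensive.
Import Order.TTheory GRing.Theory Num.Theory numFieldNormedType.Exports.
Local Open Scope classical_set_scope.
Local Open Scope ring_scope.

Section Defs.
Variable R : realType.

(* Euclidean norm on R^k (the library norm on matrices is the sup norm). *)
Definition enorm (k : nat) (x : 'rV[R]_k) : R := Num.sqrt (\sum_(i < k) x 0 i ^+ 2).

(* x = (x', t) in R^(m.+1) = R^m x R *)
Definition pt (m : nat) (x' : 'rV[R]_m) (t : R) : 'rV[R]_m.+1 :=
  \row_(i < m.+1) (match @insub nat (fun k => (k < m)%N) 'I_m (nat_of_ord i) with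
                    | Some j => x' 0 j | None => t end).
Definition xprime (m : nat) (x : 'rV[R]_m.+1) : 'rV[R]_m :=
  \row_(i < m) x 0 (widen_ord (leqnSn m) i).
Definition xlast (m : nat) (x : 'rV[R]_m.+1) : R := x 0 ord_max.

Definition ebasis (k : nat) (i : 'I_k) : 'rV[R]_k := delta_mx 0 i.

Definition C1 (k : nat) (v : 'rV[R]_k -> R) : Prop :=
  (forall x, differentiable v x) /\
  (forall i : 'I_k, continuous (fun x => 'D_(ebasis i) v x)).

Definition partial_last (m : nat) (v : 'rV[R]_m.+1 -> R) (x : 'rV[R]_m.+1) : R :=
  'D_(ebasis ord_max) v x.

Definition cyl (m : nat) (d h : R) : set 'rV[R]_m.+1 :=
  [set x | enorm (xprime x) < d /\ `|xlast x| < h].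

Definition eball (k : nat) (p : 'rV[R]_k) (eta : R) : set 'rV[R]_k :=
  [set x | enorm (x - p) < eta].

Definition cball0 (m : nat) (d : R) : set 'rV[R]_m := [set x' | enorm x' <= d].

Definition levelset (k : nat) (v : 'rV[R]_k -> R) (c : R) : set 'rV[R]_k :=
  [set x | v x = c].

Definition nbhd_union (k : nat) (G : set 'rV[R]_k) (eta : R) : set 'rV[R]_k :=
  \bigcup_(p in G) eball p eta.

Definition Zstar (m : nat) (v : 'rV[R]_m.+1 -> R) (c d : R) : set 'rV[R]_m :=
  [set x' | cball0 d x' /\ exists t : R, v (pt x' t) = c].
End Defs.

(* Main.v *)
Require Import Defs.
From HB Require Import structures.
From mathcomp Require Import all_boot all_order all_algebra.
From mathcomp Require Import all_classical all_reals all_analysis.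
From mathcomp Require Import lra.
Import Order.TTheory GRing.Theory Num.Theory numFieldNormedType.Exports.
Local Open Scope classical_set_scope.
Local Open Scope ring_scope.

Section Aux.
Variable R : realType.
Variable m : nat.

Lemma pt_lin (a b : 'rV[R]_m) (t u s : R) :
  pt (a + s *: b) (t + s * u) = pt a t + s *: pt b u.
Proof. by apply/rowP => i; rewrite !mxE; case: insub => [j|]; rewrite ?mxE. Qed.

Lemma pt_last (a : 'rV[R]_m) t : xlast (pt a t) = t.
Proof. by rewrite /xlast mxE insubF //= ltnn. Qed.

Lemma pt_prime (a : 'rV[R]_m) t : xprime (pt a t) = a.
Proof.
apply/rowP => i; rewrite !mxE insubT /=; first by rewrite ltn_ord.
by move=> h; congr (a 0 _); apply: val_inj.
Qed.

Lemma pt_xpl (x : 'rV[R]_m.+1) : pt (xprime x) (xlast x) = x.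
Proof.
apply/rowP => i; rewrite !mxE; case: insubP => [j hj ej|].
  by rewrite mxE; congr (x 0 _); apply: val_inj; rewrite /= ej.
rewrite -leqNgt => hi; rewrite /xlast; congr (x 0 _); apply: val_inj => /=.
by apply/eqP; rewrite eqn_leq hi -ltnS ltn_ord.
Qed.

Lemma pt_e (a : 'rV[R]_m) t : pt a t = t *: @ebasis R _ ord_max + pt a 0.
Proof.
apply/rowP => i; rewrite !mxE; case: insubP => [j hj ej|].
  have -> : (i == ord_max) = false by apply/negbTE; rewrite eqE /= -ej (ltn_eqF (ltn_ord j)).
  by rewrite mulr0 add0r.
rewrite -leqNgt => hi.
have -> : i == ord_max by rewrite eqE /=; apply/eqP; apply/eqP; rewrite eqn_leq hi -ltnS ltn_ord.
by rewrite mulr1 addr0.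
Qed.

End Aux.
Section Aux2.
Variable R : realType.
Variable k : nat.

Lemma line_cont (v : 'rV[R]_k -> R) (A B : 'rV[R]_k) :
  (forall x, differentiable v x) -> continuous (fun s : R => v (s *: B + A)).
Proof.
move=> dv s.
apply: (@continuous_comp _ _ _ (fun s : R => s *: B + A) v).
  apply: continuousD; first exact: scalel_continuous.
  exact: cst_continuous.
exact: differentiable_continuous.
Qed.

Lemma line_fun_eq (v : 'rV[R]_k -> R) (e a : 'rV[R]_k) (t : R) :
  (fun h : R => h^-1 *: (((fun s : R => v (s *: e + a)) \o shift t) (h *: 1) - v (t *: e + a)))
  = (fun h : R => h^-1 *: ((v \o shift (t *: e + a)) (h *: e) - v (t *: e + a))).
Proof.
apply/funext => h /=; congr (_ *: (v _ - _)).
rewrite /shift /=; rewrite -[h *: 1]/(h * 1) mulr1 scalerDl addrA.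
by [].

Qed.

Lemma line_derivable (v : 'rV[R]_k -> R) (e a : 'rV[R]_k) (t : R) :
  differentiable v (t *: e + a) -> derivable (fun s : R => v (s *: e + a)) t 1.
Proof.
move=> dv; rewrite /derivable line_fun_eq.
have := @diff_derivable _ _ _ _ _ e dv; rewrite /derivable.
move=> H. exact H.
Qed.

Lemma line_derive (v : 'rV[R]_k -> R) (e a : 'rV[R]_k) (t : R) :
  derive1 (fun s : R => v (s *: e + a)) t = 'D_e v (t *: e + a).
Proof. by rewrite derive1E /derive line_fun_eq. Qed.

End Aux2.
Section Aux3.
Variable R : realType.

Lemma enorm_last (m : nat) (x : 'rV[R]_m.+1) : `|xlast x| <= enorm x.
Proof.
rewrite /enorm /xlast -sqrtr_sqr ler_sqrt; last first.
  by apply: sumr_ge0 => i _; exact: sqr_ge0.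
rewrite (bigD1 ord_max) //= lerDl; apply: sumr_ge0 => i _; exact: sqr_ge0.
Qed.

Lemma sq_lt (S d : R) : 0 <= S -> 0 < d -> Num.sqrt S < d -> S < d ^+ 2.
Proof.
move=> S0 d0 h; have := sqr_sqrtr S0; have := sqrtr_ge0 S; nra.
Qed.

Lemma sq_le (S d : R) : 0 <= S -> 0 < d -> Num.sqrt S <= d -> S <= d ^+ 2.
Proof.
move=> S0 d0 h; have := sqr_sqrtr S0; have := sqrtr_ge0 S; nra.
Qed.

Lemma sqrt_lt (S d : R) : 0 <= S -> 0 < d -> S < d ^+ 2 -> Num.sqrt S < d.
Proof.
move=> S0 d0 h; have := sqr_sqrtr S0; have := sqrtr_ge0 S.
move=> h1 h2; rewrite ltNge; apply/negP => hd; nra.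
Qed.

Lemma enorm_conv (m : nat) (a b : 'rV[R]_m) (s d : R) :
  0 < d -> enorm a < d -> enorm b <= d -> 0 <= s -> s < 1 ->
  enorm (a + s *: (b - a)) < d.
Proof.
move=> d0 ha hb s0 s1.
have A0 : 0 <= \sum_(i < m) a 0 i ^+ 2 by apply: sumr_ge0 => i _; exact: sqr_ge0.
have B0 : 0 <= \sum_(i < m) b 0 i ^+ 2 by apply: sumr_ge0 => i _; exact: sqr_ge0.
have hA := @sq_lt _ _ A0 d0 ha. have hB := @sq_le _ _ B0 d0 hb.
apply: sqrt_lt => //; first by apply: sumr_ge0 => i _; exact: sqr_ge0.
apply: (@le_lt_trans _ _ ((1 - s) * \sum_(i < m) a 0 i ^+ 2 + s * \sum_(i < m) b 0 i ^+ 2)).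
  rewrite !mulr_sumr -big_split /=; apply: ler_sum => i _.
  rewrite !mxE; set x := a 0 i; set y := b 0 i.
  have : 0 <= s * (1 - s) * (x - y) ^+ 2.
    by apply: mulr_ge0; [apply: mulr_ge0; lra | exact: sqr_ge0].
  nra.
nra.
Qed.

End Aux3.

Lemma sign_keep (R : realType) (g : R -> R) : continuous g -> 0 < g 0 ->
  (forall s, 0 <= s -> s < 1 -> g s <> 0) -> 0 <= g 1.
Proof.
move=> gc g0 hs; rewrite leNgt; apply/negP => g1.
have [|r] := @IVT R g 0 1 0 ler01 (continuous_subspaceT gc).
  by rewrite ge_min le_max (ltW g0) (ltW g1) orbT.
rewrite in_itv /= => /andP [r0 r1] gr.
have [r1'|r1'] := ltP r 1; first exact: (hs r r0 r1').
have : r = 1 by apply/eqP; rewrite eq_le r1 r1'.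
by move=> e; move: gr g1; rewrite e => ->; rewrite ltxx.
Qed.

Theorem corollary2p2 (R : realType) (m : nat) (hm : (1 <= m)%N)
  (c d K Kbar : R) (v : 'rV[R]_m.+1 -> R) (Gamma : set 'rV[R]_m.+1) :
  0 < d -> 0 < K -> K < Kbar ->
  C1 v ->
  Gamma `<=` cyl d K ->
  levelset v c `&` cyl d Kbar !=set0 ->
  levelset v c `&` cyl d Kbar `<=` nbhd_union Gamma ((Kbar - K) / 4) ->
  (forall x, 0 < partial_last v x) ->
  Zstar v c d = @cball0 R m d.
Proof.
move=> d0 K0 KK [dv _] hG [x0 hx0] hN hpos.
have [eta [etaE [eta0 Keta]]] : exists eta, (Kbar - K) / 4 = eta /\ 0 < eta /\ K + 2 * eta < Kbar.
  by exists ((Kbar - K) / 4); split => //; split; lra.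
rewrite etaE in hN.
have [T [T0 [TK TKb]]] : exists T, 0 < T /\ K + eta < T /\ T < Kbar.
  by exists (K + 2 * eta); split; [|split]; lra.
have bnd : forall x, levelset v c x -> cyl d Kbar x -> `|xlast x| < K + eta.
  move=> x hl hc; have [p Gp hp] := hN x (conj hl hc).
  have [_ hpK] := hG p Gp.
  have h1 := @enorm_last R _ (x - p).
  have e1 : xlast (x - p) = xlast x - xlast p by rewrite /xlast !mxE.
  rewrite e1 in h1.
  have h2 : `|xlast x| <= `|xlast x - xlast p| + `|xlast p|.
    by rewrite -[X in `|X| <= _](subrK (xlast p)) ler_normD.
  rewrite /eball /= in hp.
  apply: (le_lt_trans h2); rewrite addrC; apply: ltrD => //; exact: le_lt_trans h1 hp.
have NZ : forall y' t, enorm y' < d -> K + eta <= `|t| -> `|t| < Kbar ->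
    v (pt y' t) <> c.
  move=> y' t hy ht1 ht2 hv.
  have := bnd (pt y' t) hv; rewrite pt_last.
  have : cyl d Kbar (pt y' t) by split; rewrite ?pt_prime ?pt_last.
  by move=> hc /(_ hc); lra.
set a := xprime x0; set t0 := xlast x0.
have x0E : x0 = pt a t0 by rewrite pt_xpl.
have ht0 : `|t0| < K + eta by apply: bnd; case: hx0.
have ha : enorm a < d by case: hx0 => _ [].
set e := @ebasis R _ (@ord_max m).
have mono : {in `[- T, T] &, {homo (fun s : R => v (s *: e + pt a 0)) : x y / x < y}}.
  apply: gtr0_derive1_lt_cc.
  - by move=> x _; apply: line_derivable.
  - by move=> x _; rewrite line_derive; exact: hpos.
  - exact/continuous_subspaceT/line_cont.
have ptE : forall y' t, pt y' t = t *: e + pt y' 0 by move=> y' t; exact: pt_e.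
have hT0 : t0 \in `[- T, T].
  by rewrite in_itv /=; move: ht0; move=> h; apply/andP; split;
    move: (ler_norm t0) (normrN t0) (ler_norm (- t0)); lra.
have hTT : T \in `[- T, T] by rewrite in_itv /=; apply/andP; split; lra.
have hmT : - T \in `[- T, T] by rewrite in_itv /=; apply/andP; split; lra.
have vc : v (pt a t0) = c by rewrite -x0E; case: hx0.
have up : c < v (pt a T).
  rewrite -vc (ptE a t0) (ptE a T); apply: mono => //.
  by move: ht0 (ler_norm t0); lra.
have down : v (pt a (- T)) < c.
  rewrite -vc (ptE a t0) (ptE a (- T)); apply: mono => //.
  by move: ht0 (ler_norm (- t0)); rewrite normrN; lra.
apply/seteqP; split; first by move=> x' [].
move=> x' hx'.
have seg : forall tt, (fun s : R => v (pt (a + s *: (x' - a)) tt))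
    = (fun s : R => v (s *: pt (x' - a) 0 + pt a tt)).
  move=> tt; apply/funext => s /=; congr (v _).
  have := @pt_lin R m a (x' - a) tt 0 s; rewrite mulr0 addr0 => ->.
  by rewrite addrC.
have segc : forall tt, continuous (fun s : R => v (pt (a + s *: (x' - a)) tt)).
  by move=> tt; rewrite seg; exact: line_cont.
have inball : forall s, 0 <= s -> s < 1 -> enorm (a + s *: (x' - a)) < d.
  by move=> s s0 s1; apply: enorm_conv.
have hup : 0 <= v (pt x' T) - c.
  have := @sign_keep R (fun s => v (pt (a + s *: (x' - a)) T) - c).
  rewrite /= scale0r addr0 scale1r (addrC a) subrK subr_gt0; apply => //.
    by move=> s; apply: continuousB; [exact: segc | exact: cst_continuous].
  move=> s s0 s1 /eqP; rewrite subr_eq0 => /eqP; apply: NZ; first exact: inball.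
    by rewrite (ger0_norm (ltW T0)); lra.
  by rewrite (ger0_norm (ltW T0)); lra.
have hdn : v (pt x' (- T)) - c <= 0.
  have := @sign_keep R (fun s => c - v (pt (a + s *: (x' - a)) (- T))).
  rewrite /= scale0r addr0 scale1r (addrC a) subrK subr_gt0 subr_ge0 subr_le0; apply => //.
    by move=> s; apply: continuousB; [exact: cst_continuous | exact: segc].
  move=> s s0 s1 /eqP; rewrite subr_eq0 => /eqP /esym; apply: NZ; first exact: inball.
    by rewrite normrN (ger0_norm (ltW T0)); lra.
  by rewrite normrN (ger0_norm (ltW T0)); lra.
split => //.
have cx : continuous (fun t => v (pt x' t)).
  have -> : (fun t => v (pt x' t)) = (fun t => v (t *: e + pt x' 0)).
    by apply/funext => t; rewrite (ptE x' t).
  exact: line_cont.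
have [|t _ ht] := @IVT R (fun t => v (pt x' t)) (- T) T c (ltac:(lra))
  (continuous_subspaceT cx).
  by rewrite /= ge_min le_max; apply/andP; split; [apply/orP; left | apply/orP; right]; lra.
by exists t.
Qed.
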